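(* Let $k\ge 1$, $n=2^{k+1}$, and run Jakobsson's pebble-update procedure (with its $k+1$ pebbles) for $n/2=2^k$ steps. Then for every initial label $j$ with $1\le j<k$, the pebble with initial label $j$ makes exactly $2^{k-j-1}$ backward moves during these $2^k$ steps.
   Context: Jakobsson's pebble-update procedure (hash-chain preimage traversal). Fix $K\ge 1$ and $N=2^K$ (in the claim, $N=n$ and $K=k+1$). There are $K$ pebbles, identified by their initial label $j\in\{1,\dots,K\}$. Pebble $j$ has two fixed constants $S_j=3\cdot 2^j$ (start increment) and $D_j=2^{j+1}$ (destination increment), and two integer fields $\mathrm{Position}$ and $\mathrm{Destination}$ (which may be set to $+\infty$). Initially $\mathrm{Position}=\mathrm{Destination}=2^j$ for pebble $j$, and a counter $c$ equals $0$. The pebbles are kept sorted by $\mathrm{Position}$, and ''the first pebble'' means the pebble with the smallest $\mathrm{Position}$. One step: (i) if $c=N$, stop; otherwise $c\leftarrow c+1$; (ii) for every pebble with $\mathrm{Position}\ne\mathrm{Destination}$, set $\mathrm{Position}\leftarrow\mathrm{Position}-2$; (iii) if $c$ is even, the first pebble (say with initial label $j$) makes a backward move: $\mathrm{Position}\leftarrow \mathrm{Position}+S_j$, $\mathrm{Destination}\leftarrow\mathrm{Destination}+D_j$; if the new Destination exceeds $N$, both fields are set to $+\infty$ and the pebble is said to be discarded; then the pebbles are re-sorted by $\mathrm{Position}$. (Each pebble also stores a hash-chain value, which does not influence the evolution of the Position and Destination fields.) *)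

(* Defs.v *)
From HB Require Import structures.
From mathcomp Require Import all_boot all_order all_algebra.
Set Implicit Arguments. Unset Strict Implicit. Unset Printing Implicit Defensive.
Import Order.TTheory GRing.Theory Num.Theory.
Local Open Scope ring_scope.

(* A pebble: (initial label j, Position, Destination); [None] encodes +infinity. *)
Definition pebble := (nat * option int * option int)%type.
Definition plabel (p : pebble) : nat := p.1.1.
Definition ppos (p : pebble) : option int := p.1.2.
Definition pdst (p : pebble) : option int := p.2.

Definition ole (a b : option int) : bool :=
  match a, b with
  | _, None => true
  | None, Some _ => false
  | Some x, Some y => x <= y
  end.

Definition pebble_le (p q : pebble) : bool := ole (ppos p) (ppos q).

Definition Sinc (j : nat) : int := (3 * 2 ^ j)%N%:Z.
Definition Dinc (j : nat) : int := (2 ^ j.+1)%N%:Z.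

Definition advance (p : pebble) : pebble :=
  if ppos p != pdst p then
    (plabel p, (match ppos p with Some x => Some (x - 2) | None => None end), pdst p)
  else p.

Definition backward (N : nat) (p : pebble) : pebble :=
  let j := plabel p in
  match ppos p, pdst p with
  | Some x, Some y =>
      if (N%:Z < y + Dinc j) then (j, None, None)
      else (j, Some (x + Sinc j), Some (y + Dinc j))
  | _, _ => (j, None, None)
  end.

(* state: counter c, and the list of pebbles kept sorted by Position
   ([sort] is a stable merge sort). *)
Definition pstate := (nat * seq pebble)%type.

Definition step (N : nat) (st : pstate) : pstate * option nat :=
  let: (c, l) := st in
  if c == N then (st, None) else
  let c' := c.+1 in
  let l1 := sort pebble_le (map advance l) in
  if ~~ odd c' then
    match l1 with
    | p :: t => ((c', sort pebble_le (backward N p :: t)), Some (plabel p))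
    | [::] => ((c', l1), None)
    end
  else ((c', l1), None).

Definition init_state (K : nat) : pstate :=
  (0%N, [seq (j, Some (2 ^ j)%N%:Z, Some (2 ^ j)%N%:Z) | j <- iota 1 K]).

Fixpoint run_moves (N : nat) (m : nat) (st : pstate) : seq nat :=
  match m with
  | 0 => [::]
  | m'.+1 =>
      let: (st', mv) := step N st in
      match mv with
      | Some j => j :: run_moves N m' st'
      | None => run_moves N m' st'
      end
  end.

Definition backward_moves (K m j : nat) : nat :=
  count_mem j (run_moves (2 ^ K) m (init_state K)).

(* Main.v *)
Require Import Defs.
From mathcomp Require Import all_boot all_order all_algebra.
From Stdlib Require Import Lia.
Import GRing.Theory Num.Theory.
Ltac tonat := repeat match goal with
 | H : is_true (leq _ _) |- _ => move/ssrnat.leP: H => H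
 | H : is_true (ltn _ _) |- _ => move/ssrnat.ltP: H => H
 | |- is_true (ltn _ _) => apply/ssrnat.ltP
 | |- _ /\ _ => split
 | H : is_true (@eq_op Datatypes_nat__canonical__eqtype_Equality _ _) |- _ => move/eqP: H => H
 | H : is_true (~~ (@eq_op Datatypes_nat__canonical__eqtype_Equality _ _)) |- _ => move/eqP: H => H
 | |- is_true (leq _ _) => apply/ssrnat.leP
 | |- is_true (@eq_op Datatypes_nat__canonical__eqtype_Equality _ _) => apply/eqP
 | H : context [addn] |- _ => rewrite -plusE in H
 | H : context [muln] |- _ => rewrite -multE in H
 | H : context [subn] |- _ => rewrite -minusE in H
 | |- context [addn] => rewrite -plusE
 | |- context [muln] => rewrite -multE
 | |- context [subn] => rewrite -minusE
 end.
Ltac mlia := tonat; lia.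
Ltac mnia := tonat; nia.

Fixpoint mv (j c : nat) : nat :=
  match c with
  | 0 => 0
  | c'.+1 => (mv j c' + (2 ^ j * (2 * mv j c' + 1) == c'.+1))%N
  end.
Definition dest (j c : nat) : nat := (2 ^ j * (2 * mv j c + 1))%N.

Lemma mvS j c : mv j c.+1 = (mv j c + (dest j c == c.+1))%N.
Proof. by []. Qed.

Lemma destS j c : dest j c.+1 = if dest j c == c.+1 then (dest j c + 2 ^ j.+1)%N else dest j c.
Proof.
rewrite /dest mvS; case: eqP => _; last by rewrite addn0.
rewrite expnS; set P := 2 ^ j; set m := mv j c.
rewrite /=; mnia.
Qed.

Lemma dest_gt j c : (c < dest j c)%N.
Proof.
elim: c => [|c IH]; first by rewrite /dest /= muln1 expn_gt0.
rewrite destS; case: eqP => [->|ne]; first by rewrite -addn1 leq_add2l expn_gt0.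
by rewrite ltn_neqAle eq_sym; apply/andP; split; [apply/eqP|].
Qed.

Lemma dest_le j c : (dest j c <= c + 2 ^ j.+1)%N.
Proof.
elim: c => [|c IH]; first by rewrite /dest /= muln1 add0n leq_exp2l.
rewrite destS; case: eqP => [->|ne]; first by [].
by apply: leq_trans IH _; rewrite leq_add2r.
Qed.

Lemma dest_even j c : (0 < j)%N -> dest j c = (2 * (2 ^ j.-1 * (2 * mv j c + 1)))%N.
Proof. by case: j => // j _; rewrite /dest expnS mulnA. Qed.

Lemma pow2odd_inj a b x y : (2 ^ a * (2 * x + 1) = 2 ^ b * (2 * y + 1))%N -> a = b.
Proof.
elim: a b x y => [|a IH] [|b] x y //=.
- by move=> /(congr1 odd); rewrite expnS ?oddM ?oddD ?oddM /=; case: (odd x); case: (odd y).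
- move=> e; have := congr1 odd e.
  by rewrite expnS ?oddM ?oddD ?oddM /=; case: (odd x); case: (odd y).
- move=> e; congr S; apply: (IH _ x y); apply/eqP.
  by rewrite -(eqn_pmul2l (isT : 0 < 2)%N) !mulnA -!expnS; apply/eqP.
Qed.

Lemma pow2odd_ex n : (0 < n)%N -> exists a x, n = (2 ^ a * (2 * x + 1))%N.
Proof.
elim: n {-2}n (leqnn n) => [|n IH] m hm hm0; first by case: m hm hm0.
case o: (odd m).
  by exists 0%N, m./2; rewrite mul1n -{1}(odd_double_half m) o -muln2 /= mulnC addnC.
have e : (m./2 * 2 = m)%N by rewrite -{2}(odd_double_half m) o muln2.
move: (m./2) e => h e; clear o; subst m.
have h0 : (0 < h)%N by mlia.
have [|a [x ex]] := IH h _ h0; first by mlia.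
by exists a.+1, x; rewrite ex expnS; mnia.
Qed.

Lemma mover c k : (c.+1 <= 2 ^ k)%N -> ~~ odd c.+1 ->
  exists j0, [/\ (0 < j0)%N, (j0 <= k)%N & dest j0 c = c.+1].
Proof.
move=> hc hev.
have [a [x ex]] := pow2odd_ex _ (ltn0Sn c).
have a0 : (0 < a)%N.
  by case: a ex => // ex; move: hev; rewrite ex expn0 mul1n addn1 /= oddM.
exists a; split => //.
  rewrite -(leq_exp2l _ _ (isT : 1 < 2)%N); apply: leq_trans hc.
  by rewrite ex leq_pmulr // addn1.
have g := dest_gt a c; have l := dest_le a c.
move: g l; rewrite /dest; set m := mv a c => g l.
have P0 : (0 < 2 ^ a)%N by rewrite expn_gt0.
have h1 : (2 * x + 1 <= 2 * m + 1)%N by rewrite -(leq_pmul2l P0) -ex.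
have h2 : (2 * m + 1 < 2 * x + 3)%N.
  rewrite -(ltn_pmul2l P0) mulnDr (_ : 2 * x + 3 = (2 * x + 1) + 2)%N; last by mlia.
  rewrite mulnDr -ex; move: l; rewrite expnS => l; mlia.
have -> : m = x by mlia.
by rewrite ex.
Qed.

Lemma mv_final k j : (0 < j)%N -> (j < k)%N -> mv j (2 ^ k) = (2 ^ (k - j - 1))%N.
Proof.
move=> j0 jk.
have g := dest_gt j (2 ^ k); have l := dest_le j (2 ^ k).
move: g l; rewrite /dest; set m := mv j _ => g l.
have P0 : (0 < 2 ^ j)%N by rewrite expn_gt0.
have ek : (2 ^ k = 2 ^ j * (2 * 2 ^ (k - j - 1)))%N.
  by rewrite -expnS -expnD; congr expn; mlia.
set Q := (2 ^ (k - j - 1))%N in ek *.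
have h1 : (2 * Q < 2 * m + 1)%N by move: g; rewrite ek ltn_pmul2l.
have h2 : (2 * m + 1 <= 2 * Q + 2)%N.
  by move: l; rewrite ek expnS [(2 * 2 ^ j)%N]mulnC -mulnDr leq_pmul2l.
mlia.
Qed.

Import Order.TTheory.
Lemma dest_ge2 j c : (0 < j)%N -> (2 <= dest j c)%N.
Proof.
move=> j0; rewrite /dest; apply: leq_trans (leq_pmulr _ _); last by rewrite addn1.
by rewrite -{1}(expn1 2) leq_exp2l.
Qed.

Lemma dest_even' j c : (0 < j)%N -> exists E, dest j c = (2 * E)%N.
Proof. by move=> j0; exists (2 ^ j.-1 * (2 * mv j c + 1))%N; apply: dest_even. Qed.

Lemma ole_total : total ole.
Proof. by case=> [x|] [y|] //=; apply: le_total. Qed.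

Lemma ole_trans : transitive ole.
Proof. by move=> [y|] [x|] [z|] //=; apply: le_trans. Qed.

Lemma pebble_total : total pebble_le.
Proof. by move=> p q; apply: ole_total. Qed.

Lemma pebble_trans : transitive pebble_le.
Proof. by move=> p q r; apply: ole_trans. Qed.

Lemma pebble_refl p : pebble_le p p.
Proof. by rewrite /pebble_le; case: (ppos p) => //= x. Qed.

Lemma perm_replace (T : eqType) (f g : nat -> T) (s : seq nat) (a : nat) (t : seq T) :
  uniq s -> a \in s -> perm_eq (f a :: t) (map f s) ->
  (forall j, j \in s -> j != a -> g j = f j) -> perm_eq (g a :: t) (map g s).
Proof.
move=> us ain hp hg.
have e1 : perm_eq (map f s) (f a :: map f (rem a s)) by exact: (perm_map f (perm_to_rem ain)).
have ht : perm_eq t (map f (rem a s)).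
  by rewrite -(perm_cons (f a)); apply: perm_trans hp e1.
have e2 : map g (rem a s) = map f (rem a s).
  apply/eq_in_map => j; rewrite mem_rem_uniq // inE => /andP [ja js]; exact: hg.
apply: perm_trans (_ : perm_eq _ (g a :: map g (rem a s))) _; first by rewrite perm_cons e2.
by rewrite perm_sym; exact: (perm_map g (perm_to_rem ain)).
Qed.

Section Sim.
Variable k : nat.

Definition Qp (c : nat) (h : nat -> nat) (j : nat) : pebble :=
  if (2 ^ k.+1 < dest j c)%N then (j, None, None)
  else (j, Some (Posz (2 * h j)), Some (Posz (dest j c))).

Definition Inv (c : nat) (l : seq pebble) : Prop :=
  exists h : nat -> nat, perm_eq l [seq Qp c h j | j <- iota 1 k.+1] /\
  forall j, (0 < j <= k.+1)%N -> (dest j c <= 2 ^ k.+1)%N ->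
    (dest j c <= 2 * h j)%N /\ (2 * h j <= dest j c + 2 * (dest j c - c))%N.

Lemma step_ok c l : (c < 2 ^ k)%N -> Inv c l -> exists l' mo,
  step (2 ^ k.+1) (c, l) = ((c.+1, l'), mo) /\ Inv c.+1 l' /\
  forall j, (0 < j <= k.+1)%N -> (mo == Some j) = (dest j c == c.+1).
Proof.
move=> hc [h [hp hb]].
have cN : (c == 2 ^ k.+1) = false.
  apply/negbTE; rewrite neq_ltn; apply/orP; left; rewrite expnS; mlia.
pose h' := fun j => if 2 * h j != dest j c then (h j).-1 else h j.
have Hb' : forall j, (0 < j <= k.+1)%N -> (dest j c <= 2 ^ k.+1)%N ->
    (dest j c <= 2 * h' j)%N /\ (2 * h' j <= dest j c + 2 * (dest j c - c.+1))%N.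
  move=> j hj hd; have [lo hi] := hb j hj hd.
  have j0 : (0 < j)%N by case/andP: hj.
  have [E ev] := dest_even' j c j0; have gt := dest_gt j c.
  rewrite /h'; case: eqP => e /=; mlia.
have Hadv_eq : forall j, j \in iota 1 k.+1 -> advance (Qp c h j) = Qp c h' j.
  move=> j; rewrite mem_iota => /andP [j1 jK].
  rewrite /Qp; case: ifP => hN; first by [].
  have [lo hi] : (dest j c <= 2 * h j)%N /\ (2 * h j <= dest j c + 2 * (dest j c - c))%N.
    by apply: hb; [rewrite j1 /=; mlia | rewrite leqNgt hN].
  have d2 := dest_ge2 j c j1.
  rewrite /advance /ppos /pdst /h' /=.
  case: (2 * h j =P dest j c) => e.
    by rewrite e eqxx.
  have ne : (Some (Posz (2 * h j)) != Some (Posz (dest j c))).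
    by apply/eqP => -[e']; apply: e.
  rewrite ne.
  have -> : (2 * h j = 2 * (h j).-1 + 2)%N by mlia.
  by rewrite PoszD addrK.
have Hadv : perm_eq (map advance l) [seq Qp c h' j | j <- iota 1 k.+1].
  apply: perm_trans (perm_map advance hp) _.
  rewrite -map_comp.
  have -> : [seq (advance \o Qp c h) j | j <- iota 1 k.+1] = [seq Qp c h' j | j <- iota 1 k.+1].
    by apply/eq_in_map => j /Hadv_eq.
  by [].
case: (boolP (odd c.+1)) => hodd.
  have nd : forall j, (0 < j)%N -> dest j c != c.+1.
    move=> j j0; apply/eqP => e; move: hodd; have [E ev] := dest_even' j c j0.
    by rewrite -e ev oddM.
  exists (sort pebble_le (map advance l)), None.
  split; first by rewrite /step cN /=; move: hodd => /= ->.
  split; last by move=> j /andP [j0 _]; rewrite (negbTE (nd j j0)).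
  exists h'; split.
    rewrite perm_sort; apply: perm_trans Hadv _.
    have -> : [seq Qp c h' j | j <- iota 1 k.+1] = [seq Qp c.+1 h' j | j <- iota 1 k.+1].
      apply/eq_in_map => j; rewrite mem_iota => /andP [j1 _].
      by rewrite /Qp destS (negbTE (nd j j1)).
    by [].
  move=> j hj; have j0 : (0 < j)%N by case/andP: hj.
  by rewrite destS (negbTE (nd j j0)); apply: Hb'.
have [j0 [j0p j0k d0]] := @mover c k hc hodd.
have j0K : (0 < j0 <= k.+1)%N by rewrite j0p /=; mlia.
have cN' : (c.+1 <= 2 ^ k.+1)%N by apply: leq_trans hc _; rewrite leq_exp2l.
have hj0' : (2 * h' j0 = c.+1)%N.
  have [lo hi] := Hb' j0 j0K (eq_ind_r (fun x => x <= _)%N cN' d0); rewrite d0 in lo hi; mlia.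
have Q0 : Qp c h' j0 = (j0, Some (Posz c.+1), Some (Posz c.+1)).
  by rewrite /Qp d0 hj0' ltnNge cN'.
have uq : forall j, dest j c = c.+1 -> j = j0.
  by move=> j; rewrite -d0 /dest; apply: pow2odd_inj.
case E: (sort pebble_le (map advance l)) => [|p t].
  have := size_sort pebble_le (map advance l); rewrite E size_map (perm_size hp).
  by rewrite size_map size_iota.
have pin : p \in [seq Qp c h' j | j <- iota 1 k.+1].
  by rewrite -(perm_mem Hadv) -(mem_sort pebble_le) E mem_head.
have srt : sorted pebble_le (p :: t) by rewrite -E; exact: (sort_sorted pebble_total).
have allp := order_path_min pebble_trans srt.
have q0in : Qp c h' j0 \in p :: t.
  by rewrite -E (mem_sort pebble_le) (perm_mem Hadv); apply: map_f; rewrite mem_iota j0p /=; mlia.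
have ple : pebble_le p (Qp c h' j0).
  move: q0in; rewrite inE => /orP [/eqP <-|]; first exact: pebble_refl.
  exact: (allP allp).
have pe : p = Qp c h' j0.
  case/mapP: pin => j jin pj; rewrite pj in ple *.
  suff -> : j = j0 by [].
  move: jin; rewrite mem_iota => /andP [j1 jK].
  have jK' : (0 < j <= k.+1)%N by rewrite j1 /=; mlia.
  move: ple; rewrite Q0 /pebble_le /Qp /ppos; case: ifP => hN //=.
  rewrite lez_nat => le1.
  have hd : (dest j c <= 2 ^ k.+1)%N by rewrite leqNgt hN.
  have [lo _] := Hb' j jK' hd.
  have gt := dest_gt j c.
  by apply: uq; mlia.
have Bp : forall h'' : nat -> nat, h'' j0 = (h' j0 + 3 * 2 ^ j0.-1)%N ->
    backward (2 ^ k.+1) p = Qp c.+1 h'' j0.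
  move=> h'' eh; rewrite pe Q0 /backward /Qp /= destS d0 eqxx eh.
  rewrite /Dinc /Sinc -!PoszD ltz_nat; case: ifP => // _.
  have e3 : (3 * 2 ^ j0 = 2 * (3 * 2 ^ j0.-1))%N.
    by case: (j0) j0p => // j' _; rewrite expnS /=; mlia.
  by congr (_, Some _, _); congr Posz; rewrite mulnDr hj0' -e3.
pose h'' := fun j => if j == j0 then (h' j0 + 3 * 2 ^ j0.-1)%N else h' j.
exists (sort pebble_le (backward (2 ^ k.+1) p :: t)), (Some (plabel p)).
split; first by rewrite /step cN /=; move: hodd => /= ->; rewrite E.
split; last first.
  move=> j hj; rewrite pe Q0 /plabel /=.
  case: (j0 =P j) => [<-|ne]; first by rewrite d0 !eqxx.
  have -> : (Some j0 == Some j) = false by apply/eqP => -[].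
  by symmetry; apply/eqP => dj; apply: ne; symmetry; apply: uq.
exists h''; split.
  rewrite perm_sort (Bp h''); last by rewrite /h'' eqxx.
  apply: (@perm_replace _ (Qp c h')).
  - exact: iota_uniq.
  - by rewrite mem_iota j0p /=; mlia.
  - by rewrite -pe -E perm_sort.
  move=> j jin ne; rewrite /Qp /h'' (negbTE ne) destS.
  case: eqP => [/uq e|//]; by rewrite e eqxx in ne.
move=> j hj hd; case: (j =P j0) => [->|ne].
  rewrite /h'' eqxx destS d0 eqxx.
  have e4 : (2 ^ j0.+1 = 4 * 2 ^ j0.-1)%N.
    by case: (j0) j0p => // j' _; rewrite !expnS /=; mlia.
  rewrite e4; mlia.
rewrite /h'' (introF eqP ne).
have nd : dest j c != c.+1 by apply/eqP => /uq.
by move: hd; rewrite destS (negbTE nd) => hd; exact: Hb'.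
Qed.

Lemma run_count r c l j : (c + r <= 2 ^ k)%N -> Inv c l -> (0 < j <= k.+1)%N ->
  (count_mem j (run_moves (2 ^ k.+1) r (c, l)) + mv j c = mv j (c + r))%N.
Proof.
elim: r c l => [|r IH] c l hr hi hj; first by rewrite addn0.
have hc : (c < 2 ^ k)%N by mlia.
have [l' [mo [es [hi' hm]]]] := @step_ok c l hc hi.
have -> : run_moves (2 ^ k.+1) r.+1 (c, l) =
  (let: (st', m) := step (2 ^ k.+1) (c, l) in
   match m with Some j => j :: run_moves (2 ^ k.+1) r st' | None => run_moves (2 ^ k.+1) r st' end)
  by [].
rewrite es; clear es.
have := IH c.+1 l' _ hi' hj; rewrite mvS -(hm j hj) addSnnS => IH'.
case: mo hm IH' => [j1|] hm IH'.
  rewrite [count _ _]/= -IH'; last by mlia.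
  have -> : (Some j1 == Some j) = (j1 == j) by [].
  by move: (nat_of_bool (j1 == j)) (count_mem j _) (mv j c) => a b d; mlia.
rewrite -IH'; last by mlia.
by rewrite /= addn0.
Qed.

End Sim.

Lemma Inv0 k : Inv k 0 (init_state k.+1).2.
Proof.
exists (fun j => 2 ^ j.-1)%N; split; last first.
  move=> j /andP [j0 jK] _; rewrite /dest /= muln1 subn0.
  have -> : (2 * 2 ^ j.-1 = 2 ^ j)%N by case: (j) j0 => // j' _; rewrite expnS.
  by split => //; mlia.
change (init_state k.+1).2 with [seq (j, Some (Posz (2 ^ j)%N), Some (Posz (2 ^ j)%N)) | j <- iota 1 k.+1].
have -> : [seq Qp k 0 (fun j => 2 ^ j.-1)%N j | j <- iota 1 k.+1] =
          [seq (j, Some (Posz (2 ^ j)%N), Some (Posz (2 ^ j)%N)) | j <- iota 1 k.+1].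
  apply/eq_in_map => j; rewrite mem_iota => /andP [j0 jK].
  rewrite /Qp /dest /= muln1.
  have -> : (2 * 2 ^ j.-1 = 2 ^ j)%N by case: (j) j0 => // j' _; rewrite expnS.
  by rewrite ltnNge leq_exp2l //; move: jK; rewrite add1n ltnS => ->.
by [].
Qed.

Theorem fact7 (k j : nat) :
  (1 <= k)%N -> (1 <= j)%N -> (j < k)%N ->
  backward_moves k.+1 (2 ^ k) j = (2 ^ (k - j - 1))%N.
Proof.
move=> k1 j1 jk.
rewrite /backward_moves.
have := @run_count k (2 ^ k) 0 (init_state k.+1).2 j (leqnn _) (Inv0 k).
rewrite add0n /= addn0 mv_final //.
have -> : init_state k.+1 = (0, (init_state k.+1).2)%N by [].
by apply; rewrite j1 /=; mlia.
Qed.
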